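(* Let $G,H$ be simple graphs, $k\in\mathbb N$, and let $\Phi$ be a level-$k$ quantum isomorphism map from $G$ to $H$. Then $\Phi(\boldsymbol F_GX)=\boldsymbol F_H\Phi(X)$ and $\Phi(X\boldsymbol F_G)=\Phi(X)\boldsymbol F_H$ for all $\boldsymbol F\in\mathcal Q_k$ and all $X\in\mathbb C^{V(G)^k\times V(G)^k}$.
   Context: Homomorphism tensors: for a $(k,k)$-bilabelled graph $\boldsymbol F=(F,\boldsymbol u,\boldsymbol v)$ ($\boldsymbol u,\boldsymbol v\in V(F)^k$), $\boldsymbol F_G\in\mathbb C^{V(G)^k\times V(G)^k}$ has $(\boldsymbol x,\boldsymbol y)$-entry the number of homomorphisms $h:F\to G$ with $h(u_i)=x_i$, $h(v_i)=y_i$. Bilabelled minors: via edge contraction, edge deletion, deletion of unlabelled vertices. $\boldsymbol C_k$: vertices $[2k]$, in-labels $(1,\dots,k)$, out-labels $(k+1,\dots,2k)$, edges $\{i,i+1\}$ ($i\in[2k]\setminus\{k,2k\}$), $\{1,k+1\},\{k,2k\}$; $\boldsymbol M_k$: same vertices/labels, edges $\{i,i+k\}$, $i\in[k]$. $\mathcal Q_k^P,\mathcal Q_k^S$ = bilabelled minors of $\boldsymbol C_k,\boldsymbol M_k$; $\mathcal Q_k$ their union. For $\sigma\in\mathfrak S_{2k}$, $(X^\sigma)_{\boldsymbol z}=X_{\boldsymbol w}$ with $w_{\sigma(i)}=z_i$ (index pairs viewed as $2k$-tuples). $\mathscr C_k$ = cyclic group of rotations of the cyclic sequence $(1,\dots,k,2k,\dots,k+1)$.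 A level-$k$ quantum isomorphism map from $G$ to $H$ is a linear $\Phi:\mathbb{C}^{V(G)^k\times V(G)^k}\to\mathbb{C}^{V(H)^k\times V(H)^k}$ that is completely positive, with $\Phi(\boldsymbol F_G\odot X)=\boldsymbol F_H\odot\Phi(X)$ for $\boldsymbol F\in\mathcal Q_k^P$ and all $X$ ($\odot$ entrywise), $\Phi(I)=I=\Phi^*(I)$, $\Phi(J)=J=\Phi^*(J)$ ($J$ all-ones, $\Phi^*$ the trace-inner-product adjoint), $\Phi(\boldsymbol F_G)=\boldsymbol F_H$ for all $\boldsymbol F\in\mathcal Q_k$, and $\Phi(X^\sigma)=\Phi(X)^\sigma$ for $\sigma\in\mathscr C_k$. *)

(* Defs.v *)
From HB Require Import structures.
From mathcomp Require Import all_boot all_order fingroup perm all_algebra.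
Set Implicit Arguments. Unset Strict Implicit. Unset Printing Implicit Defensive.
Import Order.TTheory GRing.Theory Num.Theory.
Local Open Scope ring_scope.

Notation idx V k := {ffun 'I_k -> V}.
Notation Mat C V k := {ffun (idx V k * idx V k) -> C}.

Section Mats.
Variables (C : numClosedFieldType) (V : finType) (k : nat).

Definition mmul (X Y : Mat C V k) : Mat C V k :=
  [ffun xz => \sum_(y : idx V k) X (xz.1, y) * Y (y, xz.2)].
Definition hprod (X Y : Mat C V k) : Mat C V k := [ffun xy => X xy * Y xy].
Definition idM : Mat C V k := [ffun xy => (xy.1 == xy.2)%:R].
Definition allones : Mat C V k := [ffun _ => 1].
Definition elemM (ab : idx V k * idx V k) : Mat C V k := [ffun xy => (xy == ab)%:R].
Definition tinner (A B : Mat C V k) : C := \sum_(xy : idx V k * idx V k) (A xy)^* * B xy.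

Definition join2 (x y : idx V k) (i : 'I_(k + k)) : V :=
  match split i with inl j => x j | inr j => y j end.
Definition unjoin2 (w : 'I_(k + k) -> V) : idx V k * idx V k :=
  ([ffun j => w (lshift k j)], [ffun j => w (rshift k j)]).

(* (X^sigma)_z = X_w where w_{sigma(i)} = z_i, i.e. w = z o sigma^-1 *)
Definition permM (s : {perm 'I_(k + k)}) (X : Mat C V k) : Mat C V k :=
  [ffun xy => X (unjoin2 (fun j => join2 xy.1 xy.2 ((s^-1)%g j)))].
End Mats.

(* Adjoint w.r.t. the trace inner product: <X, Phi^* Y> = <Phi X, Y>,
   so (Phi^* Y)_ab = <Phi E_ab, Y>. *)
Definition adjoint (C : numClosedFieldType) (VG VH : finType) (k : nat)
  (Phi : Mat C VG k -> Mat C VH k) (Y : Mat C VH k) : Mat C VG k :=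
  [ffun ab => tinner (Phi (elemM C ab)) Y].

Definition psd (C : numClosedFieldType) (I : finType) (M : I -> I -> C) : Prop :=
  (forall i j, M j i = (M i j)^*) /\
  (forall x : I -> C, 0 <= \sum_(i : I) \sum_(j : I) (x i)^* * M i j * x j).

(* complete positivity: id_m (x) Phi maps PSD block matrices to PSD ones, for every m.
   A block matrix in M_m(C^{V^k x V^k}) is Y : 'I_m -> 'I_m -> Mat, with rows/columns
   indexed by 'I_m * V^k. *)
Definition completely_positive (C : numClosedFieldType) (VG VH : finType) (k : nat)
  (Phi : Mat C VG k -> Mat C VH k) : Prop :=
  forall (m : nat) (Y : 'I_m -> 'I_m -> Mat C VG k),
    psd (fun (pa qb : 'I_m * idx VG k) => Y pa.1 qb.1 (pa.2, qb.2)) ->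
    psd (fun (pa qb : 'I_m * idx VH k) => Phi (Y pa.1 qb.1) (pa.2, qb.2)).

Definition linearP (C : numClosedFieldType) (VG VH : finType) (k : nat)
  (Phi : Mat C VG k -> Mat C VH k) : Prop :=
  forall (a : C) (X Y : Mat C VG k),
    Phi ([ffun xy => a * X xy] + Y) = [ffun xy => a * Phi X xy] + Phi Y.

Record bgraph (k : nat) := BGraph {
  bV : finType;
  bE : rel bV;            (* symmetric adjacency relation *)
  bin : 'I_k -> bV;
  bout : 'I_k -> bV
}.
Arguments bV {k} _.
Arguments bE {k} _.
Arguments bin {k} _.
Arguments bout {k} _.

Definition homT (C : numClosedFieldType) (k : nat) (F : bgraph k)
  (V : finType) (E : rel V) : Mat C V k :=
  [ffun xy : idx V k * idx V k =>
     #|[pred h : {ffun bV F -> V} |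
        [forall a, forall b, bE F a b ==> E (h a) (h b)] &&
        [forall i, (h (bin F i) == xy.1 i) && (h (bout F i) == xy.2 i)]]|%:R].

Section Minors.
Variables (k : nat) (F : bgraph k).

Definition del_edge (a b : bV F) : bgraph k :=
  @BGraph k (bV F)
    (fun x y => bE F x y && ~~ (((x == a) && (y == b)) || ((x == b) && (y == a))))
    (bin F) (bout F).

Definition del_vertex (a : bV F)
  (Hin : forall i, bin F i != a) (Hout : forall i, bout F i != a) : bgraph k :=
  @BGraph k {x : bV F | x != a}
    (fun x y => bE F (val x) (val y))
    (fun i => exist _ (bin F i) (Hin i))
    (fun i => exist _ (bout F i) (Hout i)).

Definition cmap (a b : bV F) (x : bV F) : bV F := if x == b then a else x.

Lemma cmap_neq (a b : bV F) (Hne : a != b) (x : bV F) : cmap a b x != b.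
Proof. rewrite /cmap; case: (x =P b) => [_|/eqP] //. Qed.

Definition contract (a b : bV F) (Hne : a != b) : bgraph k :=
  @BGraph k {x : bV F | x != b}
    (fun x y => [exists x0 : bV F, exists y0 : bV F,
       [&& cmap a b x0 == val x, cmap a b y0 == val y, bE F x0 y0 &
           ~~ (((x0 == a) && (y0 == b)) || ((x0 == b) && (y0 == a)))]])
    (fun i => exist _ (cmap a b (bin F i)) (cmap_neq Hne (bin F i)))
    (fun i => exist _ (cmap a b (bout F i)) (cmap_neq Hne (bout F i))).
End Minors.

Inductive minor_of (k : nat) (F0 : bgraph k) : bgraph k -> Prop :=
| mo_refl : minor_of F0 F0
| mo_del_edge (F : bgraph k) (a b : bV F) :
    bE F a b -> minor_of F0 F -> minor_of F0 (@del_edge k F a b)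
| mo_del_vertex (F : bgraph k) (a : bV F)
    (Hin : forall i, bin F i != a) (Hout : forall i, bout F i != a) :
    minor_of F0 F -> minor_of F0 (@del_vertex k F a Hin Hout)
| mo_contract (F : bgraph k) (a b : bV F) (Hne : a != b) :
    bE F a b -> minor_of F0 F -> minor_of F0 (@contract k F a b Hne).

(* C_k : vertices 0..2k-1 (paper's 1..2k shifted by one), in-labels 0..k-1,
   out-labels k..2k-1, edges {i,i+1} (i+1 <> k, 2k), {0,k}, {k-1,2k-1}. *)
Definition Ck_rel (k : nat) (i j : nat) : bool :=
  [|| (j == i.+1) && ((i.+1 < k) || ((k <= i) && (i.+1 < k + k)))%N,
      (0 < k)%N && (i == 0%N) && (j == k)
    | (0 < k)%N && (i == k.-1) && (j == (k + k).-1)].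

Definition Ck (k : nat) : bgraph k :=
  @BGraph k 'I_(k + k)
    (fun x y => Ck_rel k (val x) (val y) || Ck_rel k (val y) (val x))
    (fun i => lshift k i) (fun i => rshift k i).

Definition Mk_rel (k : nat) (i j : nat) : bool := (i < k)%N && (j == i + k)%N.

Definition Mk (k : nat) : bgraph k :=
  @BGraph k 'I_(k + k)
    (fun x y => Mk_rel k (val x) (val y) || Mk_rel k (val y) (val x))
    (fun i => lshift k i) (fun i => rshift k i).

Definition QP (k : nat) (F : bgraph k) : Prop := minor_of (Ck k) F.
Definition QS (k : nat) (F : bgraph k) : Prop := minor_of (Mk k) F.
Definition Q (k : nat) (F : bgraph k) : Prop := QP F \/ QS F.

(* 0-indexed position -> element of the cyclic sequence (0,..,k-1,2k-1,..,k) *)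
Definition cseq_nat (k i : nat) : nat := if (i < k)%N then i else ((k + k).-1 - (i - k))%N.
Definition cseq (k : nat) (i : 'I_(k + k)) : 'I_(k + k) := insubd i (cseq_nat k (val i)).

Definition rotation (k : nat) (s : {perm 'I_(k + k)}) : Prop :=
  exists r : nat, forall i j : 'I_(k + k),
    val j = ((val i + r) %% (k + k))%N -> s (cseq i) = cseq j.

Definition qiso_map (C : numClosedFieldType) (VG VH : finType) (EG : rel VG) (EH : rel VH)
  (k : nat) (Phi : Mat C VG k -> Mat C VH k) : Prop :=
  [/\ linearP Phi /\ completely_positive Phi,
      (forall F : bgraph k, QP F -> forall X : Mat C VG k,
          Phi (hprod (homT C F EG) X) = hprod (homT C F EH) (Phi X)),
      [/\ Phi (idM C VG k) = idM C VH k, adjoint Phi (idM C VH k) = idM C VG k,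
          Phi (allones C VG k) = allones C VH k & adjoint Phi (allones C VH k) = allones C VG k],
      (forall F : bgraph k, Q F -> Phi (homT C F EG) = homT C F EH) &
      (forall s : {perm 'I_(k + k)}, rotation s ->
          forall X : Mat C VG k, Phi (permM s X) = permM s (Phi X))].

(* Main.v *)
Require Import Defs.
From HB Require Import structures.
From mathcomp Require Import all_boot all_order fingroup perm all_algebra.
From mathcomp Require Import ring.
Import Order.TTheory GRing.Theory Num.Theory.
Set Implicit Arguments. Unset Strict Implicit. Unset Printing Implicit Defensive.
Local Open Scope ring_scope.

Definition o0 : 'I_3 := @Ordinal 3 0 isT.
Definition o1 : 'I_3 := @Ordinal 3 1 isT.
Definition o2 : 'I_3 := @Ordinal 3 2 isT.

Lemma sum3 (R : nmodType) (F : 'I_3 -> R) : \sum_p F p = F o0 + F o1 + F o2.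
Proof.
rewrite !big_ord_recl big_ord0 addr0 addrA.
by congr (F _ + F _ + F _); apply: val_inj.
Qed.

Lemma sum_pair (R : nmodType) (I J : finType) (F : I * J -> R) :
  \sum_(j : I * J) F j = \sum_i \sum_j F (i, j).
Proof. by rewrite pair_bigA; apply: eq_bigr => -[]. Qed.

Lemma sum_deltar (R : pzSemiRingType) (I : finType) (f : I -> R) (y : I) :
  \sum_b f b * (b == y)%:R = f y.
Proof.
rewrite (bigD1 y) //= eqxx mulr1 big1 ?addr0 // => b /negPf ->; by rewrite mulr0.
Qed.

Lemma sum_deltal (R : pzSemiRingType) (I : finType) (f : I -> R) (y : I) :
  \sum_b (y == b)%:R * f b = f y.
Proof.
rewrite (bigD1 y) //= eqxx mul1r big1 ?addr0 // => b; rewrite eq_sym => /negPf ->; by rewrite mul0r.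
Qed.

Lemma sum_deltar' (R : pzSemiRingType) (I : finType) (f : I -> R) (y : I) :
  \sum_b f b * (y == b)%:R = f y.
Proof.
rewrite (bigD1 y) //= eqxx mulr1 big1 ?addr0 // => b; rewrite eq_sym => /negPf ->; by rewrite mulr0.
Qed.

Lemma sum_deltaM (R : comPzSemiRingType) (I : finType) (k : R) (f : I -> R) (y : I) :
  \sum_i k * (i == y)%:R * f i = k * f y.
Proof. by under eq_bigr do rewrite mulrAC; rewrite (sum_deltar (fun i => k * f i)). Qed.

Section Schur.
Variables (C : numClosedFieldType) (T : finType).
Variable P : 'I_3 -> 'I_3 -> {ffun T * T -> C}.
Hypothesis hP : psd (fun pa qb : 'I_3 * T => P pa.1 qb.1 (pa.2, qb.2)).
Hypothesis P00 : forall a b, P o0 o0 (a,b) = (a == b)%:R.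

Lemma herm p q a b : P q p (b, a) = (P p q (a, b))^*.
Proof. exact: (hP.1 (p,a) (q,b)). Qed.

Let D y := P o1 o1 (y,y) - \sum_b P o1 o0 (y,b) * P o0 o1 (b,y).
Let E y c := P o1 o2 (y,c) - \sum_b P o1 o0 (y,b) * P o0 o2 (b,c).
Let R c := P o2 o2 (c,c) - \sum_b P o2 o0 (c,b) * P o0 o2 (b,c).

Lemma Econj y c : (E y c)^* = P o2 o1 (c,y) - \sum_b P o2 o0 (c,b) * P o0 o1 (b,y).
Proof.
rewrite /E rmorphB rmorph_sum /= -herm; congr (_ - _).
apply: eq_bigr => b _; rewrite rmorphM /= -!herm mulrC //.
Qed.

Lemma sum_mixN (f g h : T -> C) (c0 t : C) :
  \sum_b f b * - (c0 * g b + t * h b) =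
  - (c0 * \sum_b f b * g b + t * \sum_b f b * h b).
Proof.
rewrite !mulr_sumr -big_split -sumrN; apply: eq_bigr => b _ /=; ring.
Qed.

Lemma quad y c (c0 t : C) :
  0 <= c0^* * (c0 * D y + t * E y c) + t^* * (c0 * (E y c)^* + t * R c).
Proof.
pose z := fun pa : 'I_3 * T => if val pa.1 == 0%N then
   -(c0 * P o0 o1 (pa.2,y) + t * P o0 o2 (pa.2,c))
   else if val pa.1 == 1%N then c0 * (pa.2 == y)%:R else t * (pa.2 == c)%:R.
have := hP.2 z.
have -> : \sum_i \sum_j (z i)^* * P i.1 j.1 (i.2, j.2) * z j =
  \sum_i (z i)^* * (\sum_j P i.1 j.1 (i.2, j.2) * z j).
  by apply: eq_bigr => i _; rewrite mulr_sumr; apply: eq_bigr => j _; rewrite mulrA.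
have Mz : forall p a, \sum_(j : 'I_3 * T) P p j.1 (a, j.2) * z j =
   - (c0 * \sum_b P p o0 (a,b) * P o0 o1 (b,y) + t * \sum_b P p o0 (a,b) * P o0 o2 (b,c))
   + c0 * P p o1 (a,y) + t * P p o2 (a,c).
  move=> p a; rewrite sum_pair sum3 /= sum_mixN.
  congr (_ + _ + _).
    by rewrite -(sum_deltar (fun b => P p o1 (a, b))) mulr_sumr; apply: eq_bigr => b _; rewrite /z /=; ring.
  by rewrite -(sum_deltar (fun b => P p o2 (a, b))) mulr_sumr; apply: eq_bigr => b _; rewrite /z /=; ring.
rewrite sum_pair sum3 /=.
rewrite big1 ?add0r; last first.
  move=> a _; rewrite Mz.
  have -> : \sum_b P o0 o0 (a, b) * P o0 o1 (b, y) = P o0 o1 (a,y).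
    by under eq_bigr do rewrite P00; rewrite sum_deltal.
  have -> : \sum_b P o0 o0 (a, b) * P o0 o2 (b, c) = P o0 o2 (a,c).
    by under eq_bigr do rewrite P00; rewrite sum_deltal.
  by rewrite [X in _ * X](_ : _ = 0) ?mulr0 //; ring.
under eq_bigr do rewrite Mz rmorphM /= conjC_nat.
under [X in _ + X]eq_bigr do rewrite Mz rmorphM /= conjC_nat.
rewrite !sum_deltaM Econj /D /E /R.
move=> H; apply: le_trans H _; rewrite le_eqVlt; apply/orP; left; apply/eqP; ring.
Qed.
Hypothesis htr : \sum_y P o1 o1 (y,y) = \sum_y \sum_b P o1 o0 (y,b) * P o0 o1 (b,y).

Lemma schur y c : P o1 o2 (y,c) = \sum_b P o1 o0 (y,b) * P o0 o2 (b,c).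
Proof.
have Dge : forall y', 0 <= D y'.
  move=> y'; have := quad y' y' 1 0.
  by rewrite rmorph1 rmorph0 !mul0r !mul1r !addr0.
have D0 : D y = 0.
  apply: (psumr_eq0P (P := predT) (fun i _ => Dge i)) => //.
  by rewrite /D sumrB htr subrr.
have R0 : 0 <= R c.
  have := quad y c 0 1.
  by rewrite rmorph1 rmorph0 !mul0r !mul1r !add0r.
have := quad y c (R c + 1) (- (E y c)^*).
have cR : (R c + 1)^* = R c + 1.
  by rewrite rmorphD rmorph1 /= (conj_Creal (ger0_real R0)).
rewrite D0 cR rmorphN /= conjCK.
have -> : (R c + 1) * ((R c + 1) * 0 + - (E y c)^* * E y c) +
    - E y c * ((R c + 1) * (E y c)^* + - (E y c)^* * R c)
    = - ((R c + 2) * (E y c * (E y c)^*)) by ring.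
rewrite oppr_ge0 => Hle.
have pos : 0 < R c + 2 by apply: ltr_wpDl.
have Hz : (R c + 2) * (E y c * (E y c)^*) = 0.
  apply/eqP; rewrite eq_le Hle /=; apply: mulr_ge0; [exact: ltW|exact: mul_conjC_ge0].
move/eqP: Hz; rewrite mulf_eq0 (negPf (lt0r_neq0 pos)) /= mul_conjC_eq0 => /eqP HE.
by apply/eqP; rewrite -subr_eq0; apply/eqP.
Qed.
End Schur.

Section Main.
Variables (C : numClosedFieldType) (VG VH : finType) (k : nat).
Variable Phi : Mat C VG k -> Mat C VH k.
Hypothesis lin : Defs.linearP Phi.
Hypothesis cp : completely_positive Phi.

Definition adjM (V : finType) (A : Mat C V k) : Mat C V k :=
  [ffun xy => (A (xy.2, xy.1))^*].

Lemma adjMK (V : finType) (A : Mat C V k) : adjM (adjM A) = A.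
Proof. by apply/ffunP => -[x y]; rewrite !ffunE /= conjCK. Qed.

Lemma adjM1 (V : finType) : adjM (idM C V k) = idM C V k.
Proof. by apply/ffunP => -[x y]; rewrite !ffunE /= conjC_nat eq_sym. Qed.

Lemma mmul1l (V : finType) (A : Mat C V k) : mmul (idM C V k) A = A.
Proof.
apply/ffunP => -[x y]; rewrite !ffunE /=.
by under eq_bigr do rewrite ffunE /=; rewrite (sum_deltal (fun b => A (b, y))).
Qed.

Lemma mmul1r (V : finType) (A : Mat C V k) : mmul A (idM C V k) = A.
Proof.
apply/ffunP => -[x y]; rewrite !ffunE /=.
under eq_bigr do rewrite ffunE /=.
exact: (sum_deltar (fun b => A (x,b)) y).
Qed.

Lemma Phi0 : Phi 0 = 0.
Proof.
have H := lin (-1) 0 0.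
have E0 : [ffun xy => -1 * (0 : Mat C VG k) xy] + 0 = 0.
  by apply/ffunP => xy; rewrite !ffunE mulr0 addr0.
rewrite E0 in H; apply/ffunP => xy; have := congr1 (fun f : Mat C VH k => f xy) H.
by rewrite !ffunE mulN1r addNr.
Qed.

Lemma PhiD (X Y : Mat C VG k) : Phi (X + Y) = Phi X + Phi Y.
Proof.
have H := lin 1 X Y.
have E1 : forall (V : finType) (Z : Mat C V k), [ffun xy => 1 * Z xy] = Z.
  by move=> V Z; apply/ffunP => xy; rewrite ffunE mul1r.
by rewrite !E1 in H.
Qed.

Lemma PhiZ a (X : Mat C VG k) : Phi [ffun xy => a * X xy] = [ffun xy => a * Phi X xy].
Proof. by have := lin a X 0; rewrite !addr0 Phi0 addr0. Qed.

Lemma Phi_sum (I : finType) (F : I -> Mat C VG k) : Phi (\sum_i F i) = \sum_i Phi (F i).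
Proof. exact: (big_morph Phi PhiD Phi0). Qed.

Lemma decomp (Y : Mat C VG k) : Y = \sum_ab [ffun xy => Y ab * elemM C ab xy].
Proof.
apply/ffunP => xy; rewrite sum_ffunE.
under eq_bigr do rewrite !ffunE.
exact: (esym (sum_deltar' (fun ab => Y ab) xy)).
Qed.


Lemma Phi_expand (Y : Mat C VG k) xy :
  Phi Y xy = \sum_ab Y ab * Phi (elemM C ab) xy.
Proof.
rewrite {1}(decomp Y) Phi_sum sum_ffunE; apply: eq_bigr => ab _.
by rewrite PhiZ ffunE.
Qed.

Hypothesis adjI : adjoint Phi (idM C VH k) = idM C VG k.
Hypothesis adjJ : adjoint Phi (allones C VH k) = allones C VG k.

Lemma sum_elem ab : \sum_xy Phi (elemM C ab) xy = 1.
Proof.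
have := congr1 (fun f : Mat C VG k => f ab) adjJ; rewrite /adjoint !ffunE /tinner.
under eq_bigr do rewrite ffunE mulr1.
move=> H; have := congr1 (fun z : C => z^*) H; rewrite rmorph1 rmorph_sum => <-.
by apply: eq_bigr => xy _; rewrite /= conjCK.
Qed.

Lemma tr_elem ab : \sum_xy Phi (elemM C ab) xy * (xy.1 == xy.2)%:R = (ab.1 == ab.2)%:R.
Proof.
have := congr1 (fun f : Mat C VG k => f ab) adjI; rewrite /adjoint !ffunE /tinner.
under eq_bigr do rewrite ffunE.
move=> H; rewrite -[RHS]conjC_nat -H rmorph_sum; apply: eq_bigr => xy _.
by rewrite rmorphM /= conjCK conjC_nat.
Qed.

Lemma sumE_pres (Y : Mat C VG k) : \sum_xy Phi Y xy = \sum_xy Y xy.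
Proof.
under eq_bigr do rewrite Phi_expand.
rewrite exchange_big; apply: eq_bigr => ab _.
by rewrite -mulr_sumr sum_elem mulr1.
Qed.

Lemma trE (V : finType) (M : Mat C V k) :
  \sum_x M (x, x) = \sum_xy M xy * (xy.1 == xy.2)%:R.
Proof.
rewrite sum_pair; apply: eq_bigr => x _ /=.
exact: (esym (sum_deltar' (fun y => M (x, y)) x)).
Qed.

Lemma tr_pres (Y : Mat C VG k) : \sum_x Phi Y (x, x) = \sum_x Y (x, x).
Proof.
rewrite !trE.
under eq_bigr do rewrite Phi_expand mulr_suml.
rewrite exchange_big; apply: eq_bigr => ab _.
under eq_bigr do rewrite -mulrA.
by rewrite -mulr_sumr tr_elem.
Qed.

Lemma CP3 (w : 'I_3 -> Mat C VG k) :
  psd (fun pa qb : 'I_3 * idx VH k =>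
         Phi (mmul (adjM (w pa.1)) (w qb.1)) (pa.2, qb.2)).
Proof.
have H := @cp 3 (fun p q => mmul (adjM (w p)) (w q)); simpl in H; apply: H.
split.
  move=> [p a] [q b] /=; rewrite !ffunE /= rmorph_sum; apply: eq_bigr => c _.
  by rewrite !ffunE /= rmorphM /= conjCK mulrC.
move=> x.
pose s c := \sum_(j : 'I_3 * idx VG k) w j.1 (c, j.2) * x j.
have -> : \sum_i \sum_j (x i)^* * mmul (adjM (w i.1)) (w j.1) (i.2, j.2) * x j
    = \sum_c s c * (s c)^*.
  transitivity (\sum_i \sum_j \sum_c (x i)^* * ((w i.1 (c, i.2))^* * w j.1 (c, j.2)) * x j).
    apply: eq_bigr => i _; apply: eq_bigr => j _.
    rewrite ffunE /= mulr_sumr mulr_suml; apply: eq_bigr => c _.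
    by rewrite ffunE.
  rewrite exchange_big /=; under eq_bigr do rewrite exchange_big /=.
  rewrite exchange_big; apply: eq_bigr => c _; rewrite [LHS]exchange_big /=.
  rewrite /s mulrC rmorph_sum mulr_suml; apply: eq_bigr => i _.
  rewrite mulr_sumr; apply: eq_bigr => j _.
  rewrite rmorphM /=; ring.
by apply: sumr_ge0 => c _; exact: mul_conjC_ge0.
Qed.

Hypothesis PI : Phi (idM C VG k) = idM C VH k.

Lemma core (a : Mat C VG k)
  (hn : \sum_xy Phi a xy * (Phi a xy)^* = \sum_xy a xy * (a xy)^*) (X : Mat C VG k) :
  Phi (mmul a X) = mmul (Phi a) (Phi X) /\ Phi (mmul X a) = mmul (Phi X) (Phi a).
Proof.
split.
  pose w := fun p : 'I_3 => if val p == 0%N then idM C VG k else if val p == 1%N then adjM a else X.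
  pose P := fun p q => Phi (mmul (adjM (w p)) (w q)).
  have hP : psd (fun pa qb : 'I_3 * idx VH k => P pa.1 qb.1 (pa.2,qb.2)) := CP3 w.
  have E00 : P o0 o0 = idM C VH k by rewrite /P /= adjM1 mmul1l PI.
  have E10 : P o1 o0 = Phi a by rewrite /P /= adjMK mmul1r.
  have E02 : P o0 o2 = Phi X by rewrite /P /= adjM1 mmul1l.
  have E12 : P o1 o2 = Phi (mmul a X) by rewrite /P /= adjMK.
  have E11 : P o1 o1 = Phi (mmul a (adjM a)) by rewrite /P /= adjMK.
  have P00 : forall a b, P o0 o0 (a,b) = (a == b)%:R by move=> ? ?; rewrite E00 ffunE.
  have htr : \sum_y P o1 o1 (y,y) = \sum_y \sum_b P o1 o0 (y,b) * P o0 o1 (b,y).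
    rewrite E11 tr_pres.
    transitivity (\sum_xy a xy * (a xy)^*).
      rewrite sum_pair; apply: eq_bigr => y _; rewrite ffunE; apply: eq_bigr => b _.
      by rewrite ffunE.
    rewrite -hn sum_pair; apply: eq_bigr => y _; apply: eq_bigr => b _.
    by rewrite (herm hP o1 o0 y b) E10.
  apply/ffunP => -[y c]; rewrite -E12 (schur hP P00 htr y c) ffunE /=.
  by apply: eq_bigr => b _; rewrite E10 E02.
pose w := fun p : 'I_3 => if val p == 0%N then idM C VG k else if val p == 1%N then a else adjM X.
pose P := fun p q => Phi (mmul (adjM (w p)) (w q)).
have hP : psd (fun pa qb : 'I_3 * idx VH k => P pa.1 qb.1 (pa.2,qb.2)) := CP3 w.
have E00 : P o0 o0 = idM C VH k by rewrite /P /= adjM1 mmul1l PI.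
have E01 : P o0 o1 = Phi a by rewrite /P /= adjM1 mmul1l.
have E20 : P o2 o0 = Phi X by rewrite /P /= adjMK mmul1r.
have E21 : P o2 o1 = Phi (mmul X a) by rewrite /P /= adjMK.
have E11 : P o1 o1 = Phi (mmul (adjM a) a) by [].
have P00 : forall a b, P o0 o0 (a,b) = (a == b)%:R by move=> ? ?; rewrite E00 ffunE.
have htr : \sum_y P o1 o1 (y,y) = \sum_y \sum_b P o1 o0 (y,b) * P o0 o1 (b,y).
  rewrite E11 tr_pres.
  transitivity (\sum_xy a xy * (a xy)^*).
    rewrite sum_pair exchange_big; apply: eq_bigr => y _; rewrite ffunE; apply: eq_bigr => b _.
    by rewrite ffunE /= mulrC.
  rewrite -hn sum_pair exchange_big; apply: eq_bigr => y _; apply: eq_bigr => b _.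
  by rewrite (herm hP o0 o1 b y) E01 mulrC.
apply/ffunP => -[c y]; rewrite -E21 (herm hP o1 o2 y c) (schur hP P00 htr y c) ffunE /=.
rewrite rmorph_sum; apply: eq_bigr => b _.
by rewrite rmorphM /= -(herm hP o1 o0 y b) -(herm hP o0 o2 b c) E01 E20 mulrC.
Qed.

End Main.

Lemma QS_labelled k (F : bgraph k) : QS F -> forall v : bV F, exists i, v = bin F i \/ v = bout F i.
Proof.
rewrite /QS; elim=> [| F' a b _ _ IH | F' a Hin Hout _ IH | F' a b Hne _ _ IH] v.
- rewrite -(splitK v); case: (split v) => j; exists j; [left|right]; by [].
- exact: IH v.
- have [i [Hi|Hi]] := IH (val v); exists i; [left|right]; apply: val_inj => /=; exact Hi.
- have [i [Hi|Hi]] := IH (val v); exists i; [left|right]; apply: val_inj => /=;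
  by rewrite /cmap -Hi (negPf (valP v)).
Qed.

Lemma homT01 (C : numClosedFieldType) k (F : bgraph k) (V : finType) (E : rel V) xy :
  QS F -> homT C F E xy * homT C F E xy = homT C F E xy.
Proof.
move=> QSF; have lab := QS_labelled QSF.
rewrite ffunE.
set A := [pred h : {ffun bV F -> V} | _ ].
have Hle : (#|A| <= 1)%N.
  apply/card_le1_eqP => h1 h2; rewrite !inE => /andP[_ /forallP H1] /andP[_ /forallP H2].
  apply/ffunP => v; have [i [->|->]] := lab v;
  by move: (H1 i) (H2 i) => /andP[/eqP a1 /eqP b1] /andP[/eqP a2 /eqP b2]; rewrite ?a1 ?a2 ?b1 ?b2.
move: Hle; case: #|A| => [|[|n]] // _; by rewrite ?mul0r ?mul1r.
Qed.


Theorem lemma3p5 (C : numClosedFieldType) (VG VH : finType)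
  (EG : rel VG) (EH : rel VH)
  (EG_sym : symmetric EG) (EG_irr : irreflexive EG)
  (EH_sym : symmetric EH) (EH_irr : irreflexive EH)
  (k : nat) (Phi : Mat C VG k -> Mat C VH k) :
  qiso_map EG EH Phi ->
  forall F : bgraph k, Q F -> forall X : Mat C VG k,
    Phi (mmul (homT C F EG) X) = mmul (homT C F EH) (Phi X) /\
    Phi (mmul X (homT C F EG)) = mmul (Phi X) (homT C F EH).
Proof.
move=> [[lin cp] hadP [PI adjI PJ adjJ] hQ _] F QF X.
have hF : Phi (homT C F EG) = homT C F EH := hQ F QF.
have hn : \sum_xy Phi (homT C F EG) xy * (Phi (homT C F EG) xy)^*
        = \sum_xy homT C F EG xy * (homT C F EG xy)^*.
  have cj : forall (V : finType) (E : rel V) xy, (homT C F E xy)^* = homT C F E xy.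
    by move=> V E xy; rewrite ffunE conjC_nat.
  rewrite hF; under eq_bigr do rewrite cj; under [RHS]eq_bigr do rewrite cj.
  case: QF => [QPF|QSF].
    have := sumE_pres lin adjJ (hprod (homT C F EG) (homT C F EG)).
    have hp : forall (V : finType) (E : rel V), \sum_xy hprod (homT C F E) (homT C F E) xy
        = \sum_xy homT C F E xy * homT C F E xy.
      by move=> V E; apply: eq_bigr => xy _; rewrite /hprod ffunE.
    by rewrite hadP // hF !hp.
  under eq_bigr do rewrite homT01 //; under [RHS]eq_bigr do rewrite homT01 //.
  by rewrite -hF sumE_pres.
have := core lin cp adjI PI hn X.
by rewrite hF.
Qed.
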